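(* Let $(X,d)$ be a compact metric space and let $\mathcal{F}=\{X; f_{\lambda}\mid\lambda\in\Lambda\}$ be an iterated function system in which every $f_\lambda:X\to X$ is continuous and surjective. If $\mathcal{F}$ has the average shadowing property, then every point $x\in X$ is a chain recurrent point of $\mathcal{F}$; moreover, $\mathcal{F}$ has only one chain component, namely the whole space, i.e. for every $x,y\in X$ and every $\epsilon>0$ there exists an $\epsilon$-chain of $\mathcal{F}$ from $x$ to $y$.
   Context: An iterated function system (IFS) $\mathcal{F}=\{X; f_{\lambda}\mid\lambda\in\Lambda\}$ on a metric space $(X,d)$ is a family of continuous maps $f_\lambda:X\to X$ indexed by a finite nonempty set $\Lambda$. For $\sigma=(\lambda_0,\lambda_1,\dots)\in\Lambda^{\mathbb{Z}_+}$ write $\mathcal{F}_{\sigma_n}=f_{\lambda_{n-1}}\circ\cdots\circ f_{\lambda_0}$ for $n\ge1$ and $\mathcal{F}_{\sigma_0}=\mathrm{id}_X$. For $\delta>0$, a sequence $(x_i)_{i\ge0}$ in $X$ is a $\delta$-average pseudo-orbit of $\mathcal{F}$ if there exist a natural number $N$ and $\sigma=(\lambda_0,\lambda_1,\dots)\in\Lambda^{\mathbb{Z}_+}$ such that for all $n\ge N$, $\frac1n\sum_{i=0}^{n-1}d(f_{\lambda_i}(x_i),x_{i+1})<\delta$. A sequence $(x_i)_{i\ge0}$ is $\epsilon$-shadowed in average by $z\in X$ if there exists $\sigma\in\Lambda^{\mathbb{Z}_+}$ with $\limsup_{n\to\infty}\frac1n\sum_{i=0}^{n-1}d(\mathcal{F}_{\sigma_i}(z),x_i)<\epsilon$.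 $\mathcal{F}$ has the average shadowing property if for every $\epsilon>0$ there is $\delta>0$ such that every $\delta$-average pseudo-orbit of $\mathcal{F}$ is $\epsilon$-shadowed in average by some point of $X$. For $\epsilon>0$ and $x,y\in X$, an $\epsilon$-chain of $\mathcal{F}$ from $x$ to $y$ is a finite sequence $p_0=x,p_1,\dots,p_n=y$ ($n\ge1$) of points of $X$ together with indices $\lambda_0,\dots,\lambda_{n-1}\in\Lambda$ such that $d(f_{\lambda_i}(p_i),p_{i+1})\le\epsilon$ for all $i$. A point $x$ is chain recurrent for $\mathcal{F}$ if for every $\epsilon>0$ there is an $\epsilon$-chain from $x$ to $x$. *)

(* Defs.v *)
From Stdlib Require Import Reals Lra List.
From Coquelicot Require Import Coquelicot.
Open Scope R_scope.

Definition is_metric {X : Type} (d : X -> X -> R) : Prop :=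
  (forall x y, 0 <= d x y) /\
  (forall x y, d x y = 0 <-> x = y) /\
  (forall x y, d x y = d y x) /\
  (forall x y z, d x z <= d x y + d y z).

Definition metric_open {X : Type} (d : X -> X -> R) (U : X -> Prop) : Prop :=
  forall x, U x -> exists r, 0 < r /\ forall y, d x y < r -> U y.

Definition metric_compact {X : Type} (d : X -> X -> R) : Prop :=
  forall (I : Type) (U : I -> X -> Prop),
    (forall i, metric_open d (U i)) ->
    (forall x, exists i, U i x) ->
    exists l : list I, forall x, exists i, In i l /\ U i x.

Definition metric_continuous {X : Type} (d : X -> X -> R) (f : X -> X) : Prop :=
  forall x eps, 0 < eps -> exists delta, 0 < delta /\
    forall y, d x y < delta -> d (f x) (f y) < eps.

Definition surjective {X : Type} (f : X -> X) : Prop := forall y, exists x, f x = y.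

Definition finite_nonempty (L : Type) : Prop :=
  inhabited L /\ exists l : list L, forall a : L, In a l.

Fixpoint sum_upto (u : nat -> R) (n : nat) : R :=
  match n with
  | O => 0
  | S m => sum_upto u m + u m
  end.

(* F_{sigma_n} = f_{lambda_{n-1}} o ... o f_{lambda_0}, F_{sigma_0} = id *)
Fixpoint ifs_iter {X L : Type} (f : L -> X -> X) (sigma : nat -> L) (n : nat) (z : X) : X :=
  match n with
  | O => z
  | S m => f (sigma m) (ifs_iter f sigma m z)
  end.

Definition average_pseudo_orbit {X L : Type} (d : X -> X -> R) (f : L -> X -> X)
    (delta : R) (x : nat -> X) : Prop :=
  exists (N : nat) (sigma : nat -> L), forall n : nat, (N <= n)%nat -> (0 < n)%nat ->
    / INR n * sum_upto (fun i => d (f (sigma i) (x i)) (x (S i))) n < delta.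

Definition average_shadowed {X L : Type} (d : X -> X -> R) (f : L -> X -> X)
    (eps : R) (x : nat -> X) (z : X) : Prop :=
  exists sigma : nat -> L,
    Rbar_lt (LimSup_seq (fun n => / INR n * sum_upto (fun i => d (ifs_iter f sigma i z) (x i)) n))
            (Finite eps).

Definition average_shadowing_property {X L : Type} (d : X -> X -> R) (f : L -> X -> X) : Prop :=
  forall eps, 0 < eps -> exists delta, 0 < delta /\
    forall x : nat -> X, average_pseudo_orbit d f delta x ->
      exists z : X, average_shadowed d f eps x z.

Definition eps_chain {X L : Type} (d : X -> X -> R) (f : L -> X -> X)
    (eps : R) (x y : X) : Prop :=
  exists (n : nat) (p : nat -> X) (lam : nat -> L),
    (1 <= n)%nat /\ p O = x /\ p n = y /\
    forall i, (i < n)%nat -> d (f (lam i) (p i)) (p (S i)) <= eps.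

Definition chain_recurrent {X L : Type} (d : X -> X -> R) (f : L -> X -> X) (x : X) : Prop :=
  forall eps, 0 < eps -> eps_chain d f eps x x.

(* Main.v *)
Require Import Defs.
From Stdlib Require Import Reals Lra Lia List Classical ClassicalEpsilon.
From Coquelicot Require Import Coquelicot.
Open Scope R_scope.

Inductive chn {X L : Type} (d : X -> X -> R) (f : L -> X -> X) (eps : R) : X -> X -> Prop :=
| chn1 : forall a p q, d (f a p) q <= eps -> chn d f eps p q
| chnS : forall a p q r, d (f a p) q <= eps -> chn d f eps q r -> chn d f eps p r.

Definition chn0 {X L : Type} (d : X -> X -> R) (f : L -> X -> X) (eps : R) (p q : X) : Prop :=
  p = q \/ chn d f eps p q.

Lemma chn_eps_chain {X L : Type} (d : X -> X -> R) (f : L -> X -> X) eps p r :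
  chn d f eps p r -> eps_chain d f eps p r.
Proof.
  induction 1 as [a p q H|a p q r H _ IH].
  - exists 1%nat, (fun k => match k with O => p | _ => q end), (fun _ => a).
    split; [lia|]. split; [reflexivity|]. split; [reflexivity|].
    intros i Hi. destruct i; [exact H|lia].
  - destruct IH as (n & pp & lam & Hn & H0 & Hn' & Hst).
    exists (S n), (fun k => match k with O => p | S k => pp k end),
      (fun k => match k with O => a | S k => lam k end).
    split; [lia|]. split; [reflexivity|]. split; [exact Hn'|].
    intros i Hi. destruct i as [|i].
    + rewrite H0. exact H.
    + apply Hst. lia.
Qed.

Lemma chn_app {X L : Type} (d : X -> X -> R) (f : L -> X -> X) eps p q a r :
  chn d f eps p q -> d (f a q) r <= eps -> chn d f eps p r.
Proof.
  induction 1 as [b p q H|b p q s H _ IH]; intros Hr.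
  - eapply chnS; [exact H|]. eapply chn1; exact Hr.
  - eapply chnS; [exact H|]. apply IH; exact Hr.
Qed.

Lemma chn_trans {X L : Type} (d : X -> X -> R) (f : L -> X -> X) eps p q r :
  chn d f eps p q -> chn d f eps q r -> chn d f eps p r.
Proof.
  induction 1 as [b p q H|b p q s H _ IH]; intros Hr.
  - eapply chnS; eauto.
  - eapply chnS; eauto.
Qed.

Lemma chn0_app {X L : Type} (d : X -> X -> R) (f : L -> X -> X) eps p q a r :
  chn0 d f eps p q -> d (f a q) r <= eps -> chn d f eps p r.
Proof.
  intros [->|H] Hr.
  - eapply chn1; exact Hr.
  - eapply chn_app; eauto.
Qed.

Lemma chn_pre0 {X L : Type} (d : X -> X -> R) (f : L -> X -> X) eps p q a r :
  d (f a p) q <= eps -> chn0 d f eps q r -> chn d f eps p r.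
Proof.
  intros H [<-|Hq].
  - eapply chn1; exact H.
  - eapply chnS; eauto.
Qed.

Lemma chn_app0 {X L : Type} (d : X -> X -> R) (f : L -> X -> X) eps p q r :
  chn d f eps p q -> chn0 d f eps q r -> chn d f eps p r.
Proof.
  intros H [<-|Hq]; [exact H|]. eapply chn_trans; eauto.
Qed.

Lemma orb2 {X L : Type} (d : X -> X -> R) (f : L -> X -> X) eps
  (Hd : is_metric d) (He : 0 <= eps) s z i :
  forall m, chn0 d f eps (ifs_iter f s i z) (ifs_iter f s (i + m) z).
Proof.
  destruct Hd as [Hnn [Hid _]].
  induction m as [|m IH].
  - rewrite Nat.add_0_r. left. reflexivity.
  - rewrite Nat.add_succ_r. right. eapply chn0_app; [exact IH|].
    simpl. rewrite (proj2 (Hid _ _) eq_refl). exact He.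
Qed.

Lemma bounded {X : Type} (d : X -> X -> R) (Hd : is_metric d) (Hcpt : metric_compact d)
  (x0 : X) : exists B, forall a b, d a b <= B.
Proof.
  destruct Hd as [Hnn [Hid [Hsym Htri]]].
  destruct (Hcpt nat (fun n y => d x0 y < INR n)) as [l Hl].
  - intros n y Hy. exists (INR n - d x0 y). split; [lra|].
    intros y' Hy'. pose proof (Htri x0 y y'). lra.
  - intros y. destruct (INR_unbounded (d x0 y)) as [n Hn]. exists n. lra.
  - set (Bm := fold_right (fun n acc => Rmax (INR n) acc) 0 l).
    assert (HB : forall n, In n l -> INR n <= Bm).
    { unfold Bm. clear Hl. induction l as [|a l IH]; simpl; [tauto|].
      intros n [->|H]; [apply Rmax_l|]. eapply Rle_trans; [apply IH; exact H|apply Rmax_r]. }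
    exists (2 * Bm). intros a b.
    destruct (Hl a) as [n [Hn Ha]]. destruct (Hl b) as [m [Hm Hb]].
    pose proof (HB n Hn). pose proof (HB m Hm).
    pose proof (Htri a x0 b). pose proof (Hsym a x0). lra.
Qed.

Fixpoint posf (N : nat) (i : nat) : nat :=
  match i with
  | O => O
  | S i => if Nat.eqb (posf N i) (N - 1) then O else S (posf N i)
  end.

Lemma posf_S N i : posf N (S i) = if Nat.eqb (posf N i) (N - 1) then O else S (posf N i).
Proof. reflexivity. Qed.

Lemma posf_lt N i : (1 <= N)%nat -> (posf N i < N)%nat.
Proof.
  intros HN. induction i as [|i IH]; simpl; [lia|].
  destruct (Nat.eqb_spec (posf N i) (N - 1)); lia.
Qed.

Lemma pos_shift N a : (1 <= N)%nat -> posf N a = O -> forall r, (r < N)%nat -> posf N (a + r) = r.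
Proof.
  intros HN Ha. induction r as [|r IH]; intros Hr.
  - rewrite Nat.add_0_r. exact Ha.
  - rewrite Nat.add_succ_r, posf_S, IH by lia.
    destruct (Nat.eqb_spec r (N - 1)); lia.
Qed.

Lemma pos_mul N : (1 <= N)%nat -> forall K, posf N (N * K) = O.
Proof.
  intros HN. induction K as [|K IH].
  - rewrite Nat.mul_0_r. reflexivity.
  - replace (N * S K)%nat with (S (N * K + (N - 1))) by lia.
    rewrite posf_S, pos_shift by lia. rewrite Nat.eqb_refl. reflexivity.
Qed.

Lemma pos_period N K r : (1 <= N)%nat -> (r < N)%nat -> posf N (N * K + r) = r.
Proof. intros. apply pos_shift; auto. apply pos_mul; auto. Qed.

Lemma sum_upto_add (u : nat -> R) a b :
  sum_upto u (a + b) = sum_upto u a + sum_upto (fun r => u (a + r)%nat) b.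
Proof.
  induction b as [|b IH]; simpl.
  - rewrite Nat.add_0_r. ring.
  - rewrite Nat.add_succ_r. simpl. rewrite IH. ring.
Qed.

Lemma sum_nonneg (g : nat -> R) : (forall r, 0 <= g r) -> forall n, 0 <= sum_upto g n.
Proof. intros H n. induction n; simpl; [lra|]. pose proof (H n). lra. Qed.

Lemma sum_block (g : nat -> R) (c : R) a b n :
  (forall r, 0 <= g r) -> (forall r, (a <= r < b)%nat -> c <= g r) -> (a <= b <= n)%nat ->
  INR (b - a) * c <= sum_upto g n.
Proof.
  intros Hnn Hc Hab.
  assert (Hmono : forall k, sum_upto g b <= sum_upto g (b + k)).
  { induction k as [|k IH]. rewrite Nat.add_0_r; lra.
    rewrite Nat.add_succ_r. simpl. pose proof (Hnn (b + k)%nat). lra. }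
  assert (Hmid : forall k, (a + k <= b)%nat -> INR k * c <= sum_upto g (a + k)).
  { induction k as [|k IH]; intros Hk.
    - simpl. rewrite Rmult_0_l. rewrite Nat.add_0_r. apply sum_nonneg; auto.
    - rewrite Nat.add_succ_r, S_INR. cbn [sum_upto].
      pose proof (IH ltac:(lia)). pose proof (Hc (a + k)%nat ltac:(lia)). lra. }
  replace n with (b + (n - b))%nat by lia.
  eapply Rle_trans; [|apply Hmono].
  pose proof (Hmid (b - a)%nat ltac:(lia)).
  replace (a + (b - a))%nat with b in H by lia. exact H.
Qed.

Lemma limsup_ev (u : nat -> R) (c : R) :
  Rbar_lt (LimSup_seq u) (Finite c) -> exists N, forall n, (N <= n)%nat -> u n < c.
Proof.
  destruct (ex_LimSup_seq u) as [l Hl].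
  rewrite (is_LimSup_seq_unique u l Hl).
  destruct l as [l| |]; simpl; intros Hc.
  - assert (Hp : 0 < c - l) by lra.
    destruct (Hl (mkposreal _ Hp)) as [_ [N HN]]. exists N. intros n Hn.
    specialize (HN n Hn). simpl in HN. lra.
  - contradiction.
  - exact (Hl c).
Qed.

Definition tf (M n : nat) : nat :=
  if Nat.ltb (posf (M + M) n) M then posf (M + M) n else (posf (M + M) n - M)%nat.

Lemma tf_step M n : (2 <= M)%nat ->
  ((posf (M+M) n = M - 1 \/ posf (M+M) n = M + M - 1)%nat -> tf M (S n) = O /\ tf M n = (M - 1)%nat) /\
  (~ (posf (M+M) n = M - 1 \/ posf (M+M) n = M + M - 1)%nat -> tf M (S n) = S (tf M n)).
Proof.
  intros HM. unfold tf. rewrite posf_S.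
  pose proof (posf_lt (M + M) n ltac:(lia)).
  destruct (Nat.eqb_spec (posf (M + M) n) (M + M - 1)) as [E|E].
  - rewrite E. split; intros H'.
    + destruct (Nat.ltb_spec 0 M); destruct (Nat.ltb_spec (M+M-1) M); split; lia.
    + exfalso; tauto.
  - split; intros H'.
    + destruct H' as [H'|H']; [|lia]. rewrite H'.
      destruct (Nat.ltb_spec (S (M-1)) M); destruct (Nat.ltb_spec (M-1) M); split; lia.
    + destruct (Nat.ltb_spec (S (posf (M + M) n)) M);
      destruct (Nat.ltb_spec (posf (M + M) n) M); lia.
Qed.

Lemma count_bound (M : nat) (HM : (2 <= M)%nat) (e : nat -> R) (B : R) (HB : 0 <= B)
  (He : forall i, e i <= if orb (Nat.eqb (posf (M+M) i) (M - 1)) (Nat.eqb (posf (M+M) i) (M + M - 1))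
                         then 2 * B else 0) :
  forall n, INR M * sum_upto e n + 2 * B * INR (tf M n) <= 2 * B * INR n.
Proof.
  induction n as [|n IH].
  - unfold tf. simpl. destruct (Nat.ltb 0 M); simpl; lra.
  - destruct (tf_step M n HM) as [J NJ]. specialize (He n).
    assert (HM0 : 0 <= INR M) by apply pos_INR.
    cbn [sum_upto]. rewrite S_INR.
    destruct (classic ((posf (M+M) n = M - 1 \/ posf (M+M) n = M + M - 1)%nat)) as [Hj|Hj].
    + destruct (J Hj) as [E1 E2]. rewrite E1. rewrite E2 in IH.
      rewrite minus_INR in IH by lia. simpl INR.
      assert (e n <= 2 * B).
      { destruct Hj as [Hj|Hj]; rewrite Hj in He;
        rewrite ?Nat.eqb_refl, ?Bool.orb_true_r in He; simpl in He; exact He. }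
      assert (INR M * e n <= INR M * (2 * B)) by (apply Rmult_le_compat_l; lra).
      simpl in IH. lra.
    + rewrite (NJ Hj). rewrite S_INR.
      assert (e n <= 0).
      { destruct (Nat.eqb_spec (posf (M + M) n) (M - 1)); [tauto|].
        destruct (Nat.eqb_spec (posf (M + M) n) (M + M - 1)); [tauto|]. exact He. }
      assert (INR M * e n <= 0).
      { rewrite <- (Rmult_0_r (INR M)). apply Rmult_le_compat_l; lra. }
      lra.
Qed.

Lemma key {X L : Type} (d : X -> X -> R) (f : L -> X -> X) (Hd : is_metric d) (a0 : L)
  (B : R) (HB : forall a b, d a b <= B) (Hasp : average_shadowing_property d f)
  (pre : X -> X) (Hpre : forall y, f a0 (pre y) = y) (x y : X) (eps : R) (Heps : 0 < eps) :
  chn d f eps x y.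
Proof.
  pose proof Hd as [Hnn [Hid [Hsym Htri]]].
  assert (Hdd : forall a, d a a = 0) by (intro; apply Hid; reflexivity).
  assert (HB0 : 0 <= B) by (pose proof (HB x x); pose proof (Hnn x x); lra).
  destruct (Hasp (eps/4) ltac:(lra)) as [delta [Hdel Hsh]].
  destruct (INR_unbounded (2 * B / delta)) as [M0 HM0].
  set (M := S (S M0)).
  assert (HM : (2 <= M)%nat) by (unfold M; lia).
  assert (HMr : 2 * B / delta < INR M) by (unfold M; rewrite !S_INR; pose proof (pos_INR M0); lra).
  set (N2 := (M + M)%nat).
  set (A := fun r => ifs_iter f (fun _ => a0) r x).
  set (w := fun k => Nat.iter k pre y).
  set (g := fun r => if Nat.ltb r M then A r else w (N2 - 1 - r)%nat).
  set (xs := fun i => g (posf N2 i)).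
  assert (Hw : forall k, f a0 (w (S k)) = w k) by (intro k; unfold w; simpl; apply Hpre).
  assert (Hpo : average_pseudo_orbit d f delta xs).
  { exists 1%nat, (fun _ => a0). intros n _ Hn.
    set (e := fun i => d (f a0 (xs i)) (xs (S i))).
    assert (He : forall i, e i <= if orb (Nat.eqb (posf (M+M) i) (M - 1))
                               (Nat.eqb (posf (M+M) i) (M + M - 1)) then 2 * B else 0).
    { intro i. unfold e, xs. rewrite posf_S. unfold N2.
      pose proof (posf_lt (M + M) i ltac:(lia)).
      set (p := posf (M + M) i) in *.
      destruct (Nat.eqb_spec p (M - 1)) as [E|E].
      { simpl. match goal with |- d ?a ?b <= _ => pose proof (HB a b) end. lra. }
      destruct (Nat.eqb_spec p (M + M - 1)) as [E'|E'].
      { simpl. match goal with |- d ?a ?b <= _ => pose proof (HB a b) end. lra. }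
      cbn [orb]. unfold g.
      destruct (Nat.ltb_spec p M); destruct (Nat.ltb_spec (S p) M); try lia.
      - unfold A. simpl. rewrite Hdd. lra.
      - unfold N2. replace (M + M - 1 - p)%nat with (S (M + M - 1 - S p)) by lia.
        rewrite Hw, Hdd. lra. }
    pose proof (count_bound M HM e B HB0 He n) as Hcb.
    pose proof (pos_INR (tf M n)).
    assert (Hnp : 0 < INR n) by (apply lt_0_INR; lia).
    assert (HMp : 0 < INR M) by (apply lt_0_INR; lia).
    assert (H2B : 2 * B < delta * INR M).
    { assert (2 * B = (2 * B / delta) * delta) by (field; lra). nra. }
    assert (Hs : sum_upto e n < delta * INR n) by nra.
    replace delta with (/ INR n * (delta * INR n)) by (field; lra).
    apply Rmult_lt_compat_l; [apply Rinv_0_lt_compat; lra|]. exact Hs. }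
  destruct (Hsh xs Hpo) as [z [sig Hls]].
  apply limsup_ev in Hls. destruct Hls as [N0 HN0].
  set (F := fun i => ifs_iter f sig i z).
  set (e := fun i => d (F i) (xs i)).
  apply NNPP; intro Hnot.
  assert (Hper : forall q, (forall r, (1 <= r < M)%nat -> eps <= e (N2*q + r)%nat) \/
                          (forall r, (M <= r < N2)%nat -> eps <= e (N2*q+r)%nat)).
  { intro q.
    destruct (classic (forall r, (1 <= r < M)%nat -> eps <= e (N2*q + r)%nat)) as [h|h];
      [left; exact h|right].
    intros r2 Hr2. apply Rnot_lt_le. intro Hlt2. apply h. intros r1 Hr1.
    apply Rnot_lt_le. intro Hlt1. apply Hnot.
    set (i := (N2*q + r1)%nat) in *. set (j := (N2*q+r2)%nat) in *.
    assert (Hxi : xs i = A r1).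
    { unfold xs, i. rewrite pos_period by (unfold N2; lia). unfold g.
      destruct (Nat.ltb_spec r1 M); [reflexivity|lia]. }
    assert (Hxj : xs j = w (N2 - 1 - r2)%nat).
    { unfold xs, j. rewrite pos_period by (unfold N2; lia). unfold g.
      destruct (Nat.ltb_spec r2 M); [lia|reflexivity]. }
    assert (C1 : chn d f eps x (F i)).
    { apply chn0_app with (q := A (r1 - 1)%nat) (a := a0).
      - pose proof (orb2 d f eps Hd (Rlt_le _ _ Heps) (fun _ => a0) x 0 (r1-1)) as H.
        cbn [ifs_iter Nat.add] in H. exact H.
      - replace (f a0 (A (r1-1)%nat)) with (A r1).
        + rewrite Hsym, <- Hxi. unfold e in Hlt1. lra.
        + unfold A. replace r1 with (S (r1-1)) at 1 by lia. reflexivity. }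
    assert (C2 : chn d f eps (F i) (xs j)).
    { apply chn0_app with (q := F (j - 1)%nat) (a := sig (j-1)%nat).
      - pose proof (orb2 d f eps Hd (Rlt_le _ _ Heps) sig z i (j - 1 - i)) as H.
        replace (i + (j-1-i))%nat with (j-1)%nat in H by (unfold i, j; lia). exact H.
      - replace (f (sig (j-1)%nat) (F (j-1)%nat)) with (F j).
        + unfold e in Hlt2. lra.
        + unfold F. assert (Hj : j = S (j - 1)) by (unfold j; lia). rewrite Hj at 1. reflexivity. }
    assert (C3 : forall s, chn0 d f eps (w s) y).
    { induction s as [|s IHs]. left; reflexivity. right.
      eapply chn_pre0 with (a := a0); [rewrite Hw, Hdd; lra | exact IHs]. }
    eapply chn_app0; [eapply chn_trans; [exact C1 | exact C2] | rewrite Hxj; apply C3]. }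
  assert (Hsum : forall K, INR K * (INR (M-1) * eps) <= sum_upto e (N2 * K)).
  { induction K as [|K IH].
    - rewrite Nat.mul_0_r. simpl. lra.
    - replace (N2 * S K)%nat with (N2*K + N2)%nat by lia. rewrite sum_upto_add, S_INR.
      assert (INR (M-1) * eps <= sum_upto (fun r => e (N2*K + r)%nat) N2).
      { destruct (Hper K) as [h|h].
        - apply sum_block with (a := 1%nat) (b := M).
          + intro r. apply Hnn.
          + intros r Hr. apply h. lia.
          + unfold N2; lia.
        - eapply Rle_trans; [|apply sum_block with (a := M) (b := N2)].
          + apply Rmult_le_compat_r; [lra|]. apply le_INR. unfold N2; lia.
          + intro r. apply Hnn.
          + intros r Hr. apply h. lia.
          + unfold N2; lia. }
      lra. }
  specialize (HN0 (N2 * S N0)%nat ltac:(unfold N2; lia)).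
  specialize (Hsum (S N0)).
  change (/ INR (N2 * S N0) * sum_upto e (N2 * S N0) < eps / 4) in HN0.
  set (S0 := sum_upto e (N2 * S N0)) in *.
  rewrite mult_INR in HN0. unfold N2 in HN0. rewrite plus_INR in HN0.
  rewrite minus_INR in Hsum by lia. change (INR 1) with 1 in Hsum.
  set (m := INR M) in *. set (k := INR (S N0)) in *.
  assert (Hk : 0 < k) by (apply lt_0_INR; lia).
  assert (Hm : 2 <= m) by (unfold m; apply (le_INR 2); exact HM).
  assert (HP : 0 < (m + m) * k) by nra.
  assert (Hs : S0 < eps / 4 * ((m + m) * k)).
  { rewrite <- (Rmult_1_l S0), <- (Rinv_r ((m+m)*k)) by lra.
    rewrite Rmult_assoc. rewrite (Rmult_comm (eps/4)). apply Rmult_lt_compat_l; lra. }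
  assert (0 <= k * eps * (m - 2)) by (apply Rmult_le_pos; nra).
  nra.
Qed.

Theorem mainTheorem6 (X : Type) (d : X -> X -> R) (L : Type) (f : L -> X -> X)
  (Hd : is_metric d) (Hcpt : metric_compact d) (HL : finite_nonempty L)
  (Hcont : forall a, metric_continuous d (f a)) (Hsurj : forall a, surjective (f a))
  (Hasp : average_shadowing_property d f) :
  (forall x : X, chain_recurrent d f x) /\
  (forall (x y : X) (eps : R), 0 < eps -> eps_chain d f eps x y).
Proof.
  destruct HL as [[a0] _].
  set (pre := fun y => proj1_sig (constructive_indefinite_description _ (Hsurj a0 y))).
  assert (Hpre : forall y, f a0 (pre y) = y).
  { intro y. unfold pre. destruct (constructive_indefinite_description _ (Hsurj a0 y)); simpl; auto. }
  assert (Hall : forall (x y : X) (eps : R), 0 < eps -> eps_chain d f eps x y).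
  { intros x y eps Heps. destruct (bounded d Hd Hcpt x) as [B HB].
    apply chn_eps_chain. eapply key; eauto. }
  split; [|exact Hall].
  intros x eps Heps. apply Hall; exact Heps.
Qed.
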